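(* Let $n,d,c\in\mathbb{N}$ with $d\ge 50$ and $c\in[d]$, let $\mathcal{F}\subseteq 2^{[n]}$ be a hereditary family with $\delta(\mathcal{F})\ge 2^{d-1}-c+1$, and let $P$ be an isolated pile of $\mathcal{F}$. If $\sum_{x\in P}\omega_{\mathcal{F}}(x)<2^d-c$, then: (1) $P$ contains at most $7$ good vertices; (2) $t\le d+4$; (3) every $N\in\mathcal{N}$ satisfies $|N|\le 3$; (4) for every bad vertex $x\in P$, $\{x\}\in\mathcal{N}$.
   Context: A family is hereditary if it is closed under taking subsets. $d_{\mathcal{F}}(x)=|\{F\in\mathcal{F}:x\in F\}|$, $\delta(\mathcal{F})=\min_x d_{\mathcal{F}}(x)$, $N(x)=\bigcup_{x\in F\in\mathcal{F}}F$. The weight of $x$ is $\omega_{\mathcal{F}}(x)=\sum_{x\in F\in\mathcal{F}}\frac{1}{|F|}$. A vertex $x$ is good if $|N(x)|\ge d+1$ and bad if $|N(x)|=d$. A set $P\subseteq[n]$ with $|P|=d$ is a pile of $\mathcal{F}$ if $P\subseteq N(y)$ for every $y\in P$, and there exists $z\in P$ with $N(z)=P$; a pile is isolated if it is disjoint from every other pile. Given the pile $P$, let $\mathcal{G}=\{S\subseteq P: S\in\mathcal{F}\}$, $t=2^d-|\mathcal{G}|$, $\mathcal{M}=2^{P}\setminus\mathcal{G}$, and $\mathcal{N}=\{P\setminus M: M\in\mathcal{M}\}$ (so $|\mathcal{N}|=t$ and $\mathcal{N}$ is hereditary). *)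

(* Defs.v *)
From HB Require Import structures.
From mathcomp Require Import all_boot all_order all_algebra.
Set Implicit Arguments. Unset Strict Implicit. Unset Printing Implicit Defensive.
Import Order.TTheory GRing.Theory Num.Theory.

Section Fam.
Variable n : nat.
Implicit Types (F : {set {set 'I_n}}) (A B P Q : {set 'I_n}) (x y z : 'I_n).

Definition hereditary F := forall A B, B \in F -> A \subset B -> A \in F.

Definition deg F x : nat := #|[set A in F | x \in A]|.

Definition nbhd F x : {set 'I_n} := \bigcup_(A in F | x \in A) A.

Definition weight F x : rat := (\sum_(A in F | x \in A) (#|A|%:R)^-1)%R.

Definition good F d x := d.+1 <= #|nbhd F x|.
Definition bad F d x := #|nbhd F x| == d.

Definition is_pile F d P :=
  [/\ #|P| = d,
      (forall y, y \in P -> P \subset nbhd F y) &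
      exists2 z, z \in P & nbhd F z = P].

Definition isolated_pile F d P :=
  is_pile F d P /\ (forall Q, is_pile F d Q -> Q != P -> [disjoint P & Q]).

Definition pileG F P : {set {set 'I_n}} := [set S in powerset P | S \in F].
Definition pile_t F d P : nat := 2 ^ d - #|pileG F P|.
Definition pileM F P : {set {set 'I_n}} := powerset P :\: pileG F P.
Definition pileN F P : {set {set 'I_n}} := [set P :\: M | M in pileM F P].
End Fam.

(* Main.v *)
Require Import Defs.
From HB Require Import structures.
From mathcomp Require Import all_boot all_order all_algebra.
From mathcomp Require Import zify ring lra.
Import Order.TTheory GRing.Theory Num.Theory.
Set Implicit Arguments. Unset Strict Implicit. Unset Printing Implicit Defensive.

Lemma mem_pileM n (F : {set {set 'I_n}}) (P M : {set 'I_n}) :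
  (M \in pileM F P) = (M \subset P) && (M \notin F).
Proof. by rewrite /pileM /pileG !inE; case: (M \subset P); case: (M \in F). Qed.

Lemma setDDK n (P M : {set 'I_n}) : M \subset P -> P :\: (P :\: M) = M.
Proof. by move=> sMP; rewrite setDDr setDv set0U (setIidPr sMP). Qed.
Arguments setDDK {n P M}.

Lemma mem_pileN n (F : {set {set 'I_n}}) (P N : {set 'I_n}) :
  (N \in pileN F P) = (N \subset P) && (P :\: N \notin F).
Proof.
apply/imsetP/andP => [[M] | [sNP nF]].
- rewrite mem_pileM => /andP [sMP nM] ->.
  by rewrite subsetDl setDDK.
- exists (P :\: N); last by rewrite setDDK.
  by rewrite mem_pileM subsetDl.
Qed.

Lemma pileN_hered n (F : {set {set 'I_n}}) (P N N' : {set 'I_n}) :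
  hereditary F -> N \in pileN F P -> N' \subset N -> N' \in pileN F P.
Proof.
move=> hF; rewrite !mem_pileN => /andP [sNP nF] sN.
rewrite (subset_trans sN sNP) /=; apply: contra nF => h.
apply: hF h _; exact: setDS.
Qed.

Lemma card_pileN n (F : {set {set 'I_n}}) (P : {set 'I_n}) d :
  #|P| = d -> #|pileN F P| = pile_t F d P.
Proof.
move=> cP; rewrite /pileN card_in_imset; last first.
  move=> M1 M2; rewrite !mem_pileM => /andP [s1 _] /andP [s2 _] e.
  by rewrite -(setDDK s1) e setDDK.
rewrite /pile_t /pileM cardsD -cP -card_powerset.
rewrite (setIidPr _) //; apply/subsetP => A; rewrite /pileG inE; by case/andP.
Qed.

Definition eout n (F : {set {set 'I_n}}) (P : {set 'I_n}) x :=
  #|[set A in F | (x \in A) && ~~ (A \subset P)]|.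
Definition degN n (F : {set {set 'I_n}}) (P : {set 'I_n}) x :=
  #|[set N in pileN F P | x \in N]|.
Definition nonN n (F : {set {set 'I_n}}) (P : {set 'I_n}) x :=
  #|[set N in pileN F P | x \notin N]|.

Lemma deg_split n (F : {set {set 'I_n}}) (P : {set 'I_n}) x :
  deg F x = #|[set A in pileG F P | x \in A]| + eout F P x.
Proof.
rewrite /deg /eout -(cardsID (powerset P)); congr (_ + _); apply: eq_card => A;
  rewrite /pileG !inE; rewrite ?powersetE;
  by case: (A \in F); case: (x \in A); case: (A \subset P).
Qed.

Lemma degN_nonN n (F : {set {set 'I_n}}) (P : {set 'I_n}) d x :
  #|P| = d -> degN F P x + nonN F P x = pile_t F d P.
Proof.
move=> cP; rewrite -(card_pileN F cP) /degN /nonN -(cardsID [set N : {set 'I_n} | x \in N] (pileN F P)).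
by congr (_ + _); apply: eq_card => N; rewrite !inE andbC.
Qed.

Lemma card_half n (P : {set 'I_n}) x : x \in P ->
  #|[set A in powerset P | x \in A]| = 2 ^ (#|P|.-1).
Proof.
move=> xP.
have -> : [set A in powerset P | x \in A] = [set x |: B | B in powerset (P :\ x)].
  apply/setP => A; rewrite inE ?powersetE; apply/andP/imsetP => [[sAP xA] | [B]].
    exists (A :\ x); first by rewrite ?powersetE setSD.
    by rewrite setD1K.
  rewrite ?powersetE => sB ->; rewrite setU11; split => //.
  by rewrite subUset sub1set xP (subset_trans sB) // subD1set.
rewrite card_in_imset ?card_powerset; last first.
  move=> B1 B2; rewrite !powersetE => s1 s2 e.
  have n1 : x \notin B1 by apply/negP => /(subsetP s1); rewrite !inE eqxx.
  have n2 : x \notin B2 by apply/negP => /(subsetP s2); rewrite !inE eqxx.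
  by rewrite -(setU1K n1) e setU1K.
by rewrite (cardsD1 x P) xP.
Qed.

Lemma split_x n (F : {set {set 'I_n}}) (P : {set 'I_n}) x : x \in P ->
  #|[set A in pileG F P | x \in A]| + nonN F P x = 2 ^ (#|P|.-1).
Proof.
move=> xP; rewrite -(card_half xP) -(cardsID F [set A in powerset P | x \in A]); congr (_ + _).
  apply: eq_card => A; rewrite /pileG !inE.
  by case: (A \subset P); case: (A \in F); case: (x \in A).
rewrite /nonN.
have -> : [set N in pileN F P | x \notin N] =
          [set P :\: M | M in [set A in powerset P | x \in A] :\: F].
  apply/setP => N; rewrite inE; apply/andP/imsetP => [[hN xN] | [M]].
    move: hN; rewrite mem_pileN => /andP [sNP nF].
    exists (P :\: N); last by rewrite setDDK.
    by rewrite !inE ?powersetE subsetDl nF xP xN.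
  move=> hM ->; move: hM; rewrite !inE ?powersetE => /andP [nF /andP [sMP xM]].
  by rewrite mem_pileN subsetDl setDDK // nF xM; split.
rewrite card_in_imset // => M1 M2; rewrite !inE ?powersetE.
by move=> /andP [_ /andP [s1 _]] /andP [_ /andP [s2 _]] e; rewrite -(setDDK s1) e setDDK.
Qed.

Lemma sub_nbhd n (F : {set {set 'I_n}}) x A : A \in F -> x \in A -> A \subset nbhd F x.
Proof.
move=> AF xA; rewrite /nbhd.
exact: (bigcup_sup A (P := fun A => (A \in F) && (x \in A)) (F := id)) (introT andP (conj AF xA)).
Qed.

Lemma bad_nbhd n (F : {set {set 'I_n}}) d P x :
  is_pile F d P -> x \in P -> bad F d x -> nbhd F x = P.
Proof.
case=> cP sub _ xP /eqP b; apply/eqP; rewrite eq_sym eqEcard sub //.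

by rewrite b cP /=.
Qed.

Lemma bad_eout n (F : {set {set 'I_n}}) d P x :
  is_pile F d P -> x \in P -> bad F d x -> eout F P x = 0.
Proof.
move=> hP xP b; rewrite /eout; apply/eqP; rewrite cards_eq0; apply/eqP/setP => A.
rewrite !inE; apply/negP => /andP [AF /andP [xA nA]].
by move: nA; rewrite -(bad_nbhd hP xP b) (sub_nbhd AF xA).
Qed.

Lemma good_pair n (F : {set {set 'I_n}}) d P x :
  hereditary F -> is_pile F d P -> x \in P -> good F d x ->
  exists2 y, y \notin P & [set x; y] \in F.
Proof.
move=> hF [cP sub _] xP g.
have : ~~ (nbhd F x \subset P).
  apply/negP => /subset_leq_card; rewrite cP; move: g; rewrite /good; lia.
case/subsetPn => y yN yP; exists y => //.
move: yN; rewrite /nbhd => /bigcupP [A /andP [AF xA] yA].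
apply: hF AF _; by rewrite subUset !sub1set xA yA.
Qed.

Lemma set0_in n (F : {set {set 'I_n}}) x :
  hereditary F -> 0 < deg F x -> set0 \in F.
Proof.
move=> hF; rewrite /deg card_gt0 => /set0Pn [A]; rewrite inE => /andP [AF _].
by apply: hF AF _; rewrite sub0set.
Qed.

Lemma degN_le_nonN n (F : {set {set 'I_n}}) P x :
  hereditary F -> degN F P x <= nonN F P x.
Proof.
move=> hF; rewrite /degN /nonN.
rewrite -(card_in_imset (f := fun N => N :\ x)); last first.
  move=> N1 N2; rewrite !inE => /andP [_ x1] /andP [_ x2] e.
  by rewrite -(setD1K x1) e setD1K.
apply: subset_leq_card; apply/subsetP => N' /imsetP [N].
rewrite inE => /andP [hN xN] ->.
rewrite inE setD11 andbT; apply: pileN_hered hF hN _; exact: subD1set.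
Qed.

Lemma single_in n (F : {set {set 'I_n}}) P x :
  hereditary F -> 0 < degN F P x -> [set x] \in pileN F P.
Proof.
move=> hF; rewrite /degN card_gt0 => /set0Pn [N]; rewrite inE => /andP [hN xN].
by apply: pileN_hered hF hN _; rewrite sub1set.
Qed.

Lemma pow_le n (F : {set {set 'I_n}}) P N :
  hereditary F -> N \in pileN F P -> 2 ^ #|N| <= #|pileN F P|.
Proof.
move=> hF hN; rewrite -card_powerset; apply: subset_leq_card; apply/subsetP => N'.
rewrite powersetE => s; exact: pileN_hered hF hN s.
Qed.

Local Open Scope ring_scope.

Definition Wx n (F : {set {set 'I_n}}) (P : {set 'I_n}) x : rat :=
  \sum_(A in F | (x \in A) && ~~ (A \subset P)) (#|A|%:R)^-1.

Lemma inner_sum n (P A : {set 'I_n}) : A \subset P ->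
  \sum_(x in P) (if x \in A then (#|A|%:R : rat)^-1 else 0) = (A != set0)%:R.
Proof.
move=> sAP; rewrite -big_mkcondr /=.
rewrite (eq_bigl (fun x => x \in A)); last first.
  by move=> x /=; case xA: (x \in A); rewrite ?andbF ?andbT // (subsetP sAP).
rewrite sumr_const; case: eqP => [-> | /eqP ne]; first by rewrite cards0 /= mulr0n.
have nz : (#|A|%:R : rat) != 0 by rewrite pnatr_eq0 -lt0n card_gt0.
by rewrite -[LHS]mulr_natr mulVf.
Qed.

Lemma weight_sum n (F : {set {set 'I_n}}) (P : {set 'I_n}) :
  set0 \in F ->
  \sum_(x in P) weight F x = (#|pileG F P| - 1)%:R + \sum_(x in P) Wx F P x.
Proof.
move=> F0.
rewrite /weight /Wx.
under eq_bigr => x _ do rewrite (bigID (fun A : {set 'I_n} => A \subset P)) /=.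
rewrite big_split /=; congr (_ + _); last first.
  by apply: eq_bigr => x _; apply: eq_bigl => A; rewrite andbA.
have e : forall x, \sum_(i | (i \in F) && (x \in i) && (i \subset P)) (#|i|%:R : rat)^-1 =
   \sum_(A in pileG F P) (if x \in A then (#|A|%:R : rat)^-1 else 0).
  move=> x; rewrite big_mkcond [RHS]big_mkcond /=; apply: eq_bigr => A _.
  rewrite /pileG !inE ?powersetE.
  by case: (A \in F); case: (x \in A); case: (A \subset P).
under eq_bigr => x _ do rewrite e.
rewrite exchange_big /=.
have G0 : set0 \in pileG F P by rewrite /pileG !inE ?powersetE sub0set F0.
rewrite (eq_bigr (fun A => (A != set0)%:R)); last first.
  move=> A; rewrite /pileG !inE ?powersetE => /andP [sAP _]; exact: inner_sum.
rewrite (big_setD1 _ G0) /= eqxx add0r.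
rewrite (eq_bigr (fun _ => 1)); last by move=> A; rewrite !inE => /andP [-> _].
by rewrite sumr_const (cardsD1 set0 (pileG F P)) G0 add1n subn1 /=.
Qed.

Lemma Wx_ge0 n (F : {set {set 'I_n}}) P x : 0 <= Wx F P x.
Proof. by apply: sumr_ge0 => A _; rewrite invr_ge0. Qed.

Local Close Scope ring_scope.

Local Open Scope ring_scope.

Lemma sum_sub_le (I : finType) (O Q : pred I) (f : I -> rat) :
  (forall i, O i -> 0 <= f i) -> (forall i, Q i -> O i) ->
  \sum_(i | Q i) f i <= \sum_(i | O i) f i.
Proof.
move=> f0 QO; rewrite [X in _ <= X](bigID Q) /=.
rewrite (eq_bigl Q); last by move=> i; case Qi: (Q i); rewrite ?andbT ?andbF ?QO.
rewrite lerDl; apply: sumr_ge0 => i /andP [Oi _]; exact: f0.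
Qed.

Lemma Wx_good n (F : {set {set 'I_n}}) d P x :
  hereditary F -> is_pile F d P -> x \in P ->
  (good F d x)%:R / 2 <= Wx F P x.
Proof.
move=> hF hP xP; case g: (good F d x); last by rewrite mul0r Wx_ge0.
have [y yP xyF] := good_pair hF hP xP g.
have xy : x != y by apply/eqP => e; move: yP; rewrite -e xP.
rewrite /Wx (bigD1 [set x; y]) /=; last first.
  by rewrite xyF !inE eqxx /= subUset !sub1set xP yP.
rewrite cards2 xy mul1r -[X in X <= _]addr0 lerD //.
apply: sumr_ge0 => A _; by rewrite invr_ge0.
Qed.

Lemma pow_ineq r m : (r <= m)%N -> (2 ^ r * (m + 2) <= (r + 2) * 2 ^ m)%N.
Proof.
elim: m => [|m IH] rm; first by move: rm; rewrite leqn0 => /eqP ->.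
case: (ltngtP r m.+1) rm => // [rm _ | -> _]; last by rewrite mulnC.
have := IH rm; rewrite expnS; move: (2 ^ r)%N (2 ^ m)%N => a b; nia.
Qed.

Lemma eout_sum n (F : {set {set 'I_n}}) P x :
  (eout F P x)%:R = \sum_(A | (A \in F) && ((x \in A) && ~~ (A \subset P))) (1 : rat).
Proof. by rewrite /eout -sum1dep_card natr_sum. Qed.

Lemma Wx_min n (F : {set {set 'I_n}}) P x r :
  hereditary F ->
  (minn (eout F P x) (2 ^ r))%:R <= (r + 2)%:R * Wx F P x.
Proof.
move=> hF.
set O := fun A : {set 'I_n} => (A \in F) && ((x \in A) && ~~ (A \subset P)).
case: (boolP [exists A, O A && (r.+2 < #|A|)%N]) => [/existsP [A0 /andP [OA0 big]] | /existsPn small].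
-
  move: (OA0); rewrite /O => /andP [A0F /andP [xA0 nA0]].
  have [y yA0 yP] := subsetPn nA0.
  set C := A0 :\: [set x; y].
  have cC : (#|A0| <= #|C| + 2)%N.
    rewrite /C cardsD; have : (#|A0 :&: [set x; y]| <= 2)%N.
      apply: leq_trans (subset_leq_card (subsetIr _ _)) _.
      by rewrite cards2; case: (x != y).
    have := subset_leq_card (subsetIl A0 [set x; y]); lia.
  have rC : (r <= #|C|)%N by lia.
  pose f := fun U : {set 'I_n} => x |: (y |: U).
  have injf : {in powerset C &, injective f}.
    have k : forall U : {set 'I_n}, U \subset C -> (f U) :\: [set x; y] = U.
      move=> U sU; apply/setP => z; rewrite !inE.
      case: (boolP (z \in (U : {set 'I_n}))) => zU; last by rewrite !orbF; case: (z == x); case: (z == y).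
      have := subsetP sU z zU; rewrite /C !inE => /andP [/norP [/negbTE -> /negbTE ->] _].
      by [].
    move=> U1 U2; rewrite !powersetE => s1 s2 e.
    by rewrite -(k _ s1) e k.
  set Q := [set f U | U in powerset C].
  have QA0 : forall A : {set 'I_n}, A \in Q -> A \subset A0.
    move=> A /imsetP [U]; rewrite powersetE => sU ->.
    rewrite /f !subUset !sub1set xA0 yA0 /=.
    by apply: subset_trans sU _; rewrite /C subsetDl.
  have QO : forall A : {set 'I_n}, A \in Q -> O A.
    move=> A AQ; move: (AQ) => /imsetP [U _ eA].
    rewrite /O (hF _ _ A0F (QA0 A AQ)) eA /f !inE eqxx /=.
    apply/negP => s; move: yP; rewrite (subsetP s) //.
    by rewrite !inE eqxx orbT.
  have a0 : (0 < #|A0|)%N by apply/card_gt0P; exists x.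
  have step1 : \sum_(A in Q) (#|A0|%:R : rat)^-1 <= Wx F P x.
    apply: (@le_trans _ _ (\sum_(A in Q) (#|A|%:R : rat)^-1)).
      apply: ler_sum => A AQ.
      have aA : (0 < #|A|)%N.
        have := QO A AQ; rewrite /O => /andP [_ /andP [xA _]].
        by apply/card_gt0P; exists x.
      rewrite lef_pV2 ?posrE ?ltr0n // ler_nat.
      exact: subset_leq_card (QA0 A AQ).
    rewrite /Wx; apply: (sum_sub_le (O := O) (Q := fun A => A \in Q)).
      by move=> A _; rewrite invr_ge0.
    exact: QO.
  rewrite sumr_const card_in_imset // card_powerset in step1.
  apply: (@le_trans _ _ (2 ^ r)%:R); first by rewrite ler_nat geq_minr.
  apply: le_trans (ler_wpM2l _ step1); last by rewrite ler0n.
  rewrite -[X in _ * X]mulr_natr mulrCA mulrC ler_pdivlMr ?ltr0n // -!natrM ler_nat.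
  apply: leq_trans (_ : (2 ^ r * (#|C| + 2) <= _)%N); first by rewrite leq_mul2l cC orbT.
  by rewrite pow_ineq.
- apply: (@le_trans _ _ (eout F P x)%:R); first by rewrite ler_nat geq_minl.
  rewrite eout_sum mulr_sumr; apply: ler_sum => A OA.
  have aA : (0 < #|A|)%N.
    move: OA => /andP [_ /andP [xA _]]; by apply/card_gt0P; exists x.
  have := small A; rewrite /O OA /= -leqNgt => sA.
  by rewrite ler_pdivlMr ?ltr0n // mul1r ler_nat addn2.
Qed.

Local Close Scope ring_scope.

Lemma p_bound p d : 50 <= d -> 2 ^ p <= d -> 5 * p + 7 <= d.
Proof.
move=> h50 hp; case: (leqP p 8) => hp8; first lia.
suff : 5 * p + 7 <= 2 ^ p by lia.
elim: p hp8 {hp} => // p IH; rewrite ltnS leq_eqVlt => /orP [/eqP <- // | /IH h].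
rewrite expnS; lia.
Qed.

Lemma sum_card_dep (I : finType) (A : pred I) (Q : pred I) :
  \sum_(i in A) (Q i : nat) = #|[set i in A | Q i]|.
Proof.
rewrite -sum1dep_card big_mkcondr /=; apply: eq_bigr => i _; by case: (Q i).
Qed.

Lemma sum_degN n (F : {set {set 'I_n}}) (P : {set 'I_n}) :
  \sum_(x in P) degN F P x = \sum_(N in pileN F P) #|N|.
Proof.
have e : forall x, degN F P x = \sum_(N in pileN F P) (x \in N : nat).
  by move=> x; rewrite sum_card_dep.
under eq_bigr => x _ do rewrite e.
rewrite exchange_big /=; apply: eq_bigr => N hN.
rewrite sum_card_dep; apply: eq_card => x; rewrite inE.
move: hN; rewrite mem_pileN => /andP [sNP _].
by case xN: (x \in N); rewrite ?andbT ?andbF // (subsetP sNP).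
Qed.

Lemma arith_final d c t k g b L p X Mn S :
  c <= d -> c <= t -> k = t + 1 - c -> 1 < k -> g + b = d -> g < 2 * k ->
  1 + b + L <= t -> 5 * p + 7 <= d -> d * k <= X + S -> X <= Mn ->
  Mn < (p.+1 + 2) * k -> S <= (t - 1) + p * L -> False.
Proof.
move=> cd ct kd k2 gbd g2k hL p57 dk XM Mk SL.
have [j kj] : exists j, k = j.+2 by exists (k - 2); lia.
rewrite kj in dk Mk g2k.
have hL2 : L <= 3 * j + 3 by lia.
have pL : p * L <= p * (3 * j + 3) by rewrite leq_mul2l hL2 orbT.
have tk : t - 1 <= d + j by lia.
have pk : (5 * p + 7) * j.+1 <= d * j.+1 by rewrite leq_mul2r p57 orbT.
have e1 : (5 * p + 7) * j.+1 = 5 * (p * j) + 7 * j + 5 * p + 7 by nia.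
have e2 : d * j.+1 = d * j + d by nia.
have e3 : p * (3 * j + 3) = 3 * (p * j) + 3 * p by nia.
have e4 : d * j.+2 = d * j + 2 * d by nia.
have e5 : (p.+1 + 2) * j.+2 = p * j + 2 * p + 3 * j + 6 by nia.
rewrite e1 e2 in pk; rewrite e3 in pL; rewrite e4 in dk; rewrite e5 in Mk.
move: (p * j) (d * j) pk pL dk Mk => pj dj *.
lia.
Qed.

Unset Implicit Arguments.
Theorem mainTheorem15 (n d c : nat) (F : {set {set 'I_n}}) (P : {set 'I_n}) :
  50 <= d -> 1 <= c <= d ->
  hereditary F ->
  (forall x : 'I_n, 2 ^ d.-1 - c + 1 <= deg F x) ->
  isolated_pile F d P ->
  (\sum_(x in P) weight F x < (2 ^ d - c)%:R)%R ->
  [/\ #|[set x in P | good F d x]| <= 7,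
      pile_t F d P <= d + 4,
      (forall N, N \in pileN F P -> #|N| <= 3) &
      (forall x, x \in P -> bad F d x -> [set x] \in pileN F P)].
Proof.
move=> h50 /andP [c1 cd] hF hdeg [hP _] hw.
have [cP sub [z zP nz]] := hP.
set t := pile_t F d P.
have tN : #|pileN F P| = t by exact: card_pileN.
have F0 : set0 \in F by apply: (set0_in (x := z) hF); have := hdeg z; lia.
have cpow : c <= 2 ^ d.-1.
  have := ltn_expl d.-1 (isT : 1 < 2); lia.
have key : forall x, x \in P -> nonN F P x <= c - 1 + eout F P x.
  move=> x xP; have := hdeg x; rewrite (deg_split F P).
  have := split_x F xP; rewrite cP; move: (2 ^ d.-1) cpow => Q cQ h1 h2; clear -h1 h2 cQ c1; move: h1 h2; move: (#|_|) (nonN F P x) (eout F P x) => a b e; lia.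
have dn : forall x, degN F P x + nonN F P x = t by move=> x; exact: degN_nonN.
have cG : #|pileG F P| + t = 2 ^ d.
  rewrite /t /pile_t; have : #|pileG F P| <= 2 ^ d.
    rewrite -cP -card_powerset; apply: subset_leq_card; apply/subsetP => A.
    by rewrite /pileG inE => /andP [].
  lia.
have G1 : 1 <= #|pileG F P|.
  by apply/card_gt0P; exists set0; rewrite /pileG !inE sub0set F0.
have d2 : d < 2 ^ d by apply: ltn_expl.
set W := (\sum_(x in P) Wx F P x)%R.
have W0 : (0 <= W)%R by apply: sumr_ge0 => x _; exact: Wx_ge0.
rewrite (weight_sum P F0) -/W in hw.
have ab : #|pileG F P| - 1 < 2 ^ d - c.
  rewrite -(ltr_nat rat); apply: le_lt_trans hw; by rewrite lerDl.
have ct : c <= t by lia.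
set k := t + 1 - c.
have hWk : (W < k%:R)%R.
  have -> : k = (2 ^ d - c) - (#|pileG F P| - 1) by rewrite /k; lia.
  rewrite natrB ?(ltnW ab) // ltrBrDl; by [].
have gb : forall x, x \in P -> good F d x = ~~ bad F d x.
  move=> x xP; have := subset_leq_card (sub x xP); rewrite cP /good /bad.
  move: #|nbhd F x| => m hm; by rewrite eq_sym eqn_leq hm /= ltnNge.
set g := #|[set x in P | good F d x]|.
set b := #|[set x in P | bad F d x]|.
have gbd : g + b = d.
  rewrite -cP -(cardsID [set x | good F d x] P); congr (_ + _); apply: eq_card => x; rewrite !inE.
    by rewrite andbC.
  by case xP: (x \in P); rewrite ?andbF ?andbT //= gb // negbK.
have gW : ((g%:R / 2) <= W)%R.
  rewrite /g -sum_card_dep natr_sum mulr_suml; apply: ler_sum => y yP; exact: Wx_good hF hP yP.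
have g2k : g < 2 * k.
  have h := le_lt_trans gW hWk.
  rewrite -(ltr_nat rat) natrM mulrC -ltr_pdivrMr //.
have badN : forall x, x \in P -> bad F d x -> k <= degN F P x.
  move=> x xP bx; have := key x xP; rewrite (bad_eout hP xP bx) addn0.
  have := dn x; rewrite /k; move: (degN F P x) (nonN F P x) => u v; lia.
have bad1 : forall x, x \in P -> bad F d x -> [set x] \in pileN F P.
  move=> x xP bx; apply: single_in hF _; have := badN x xP bx; rewrite /k.
  move: (degN F P x) => u; lia.
have bz : bad F d z by rewrite /bad nz cP.
have t2c : t <= 2 * (c - 1).
  have := key z zP; rewrite (bad_eout hP zP bz) addn0.
  have := dn z; have := degN_le_nonN P z hF.
  move: (degN F P z) (nonN F P z) => u v; lia.
have N0 : set0 \in pileN F P.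
  by apply: pileN_hered hF (bad1 z zP bz) (sub0set _).
set L := #|[set N in pileN F P | 2 <= #|N|]|.
have hL : 1 + b + L <= t.
  pose S := set0 |: [set [set x] | x in [set x in P | bad F d x]].
  have sS : S \subset [set N in pileN F P | #|N| <= 1].
    apply/subsetP => N; rewrite !inE => /orP [/eqP -> | /imsetP [x]].
      by rewrite N0 cards0.
    by rewrite inE => /andP [xP bx] ->; rewrite bad1 // cards1.
  have cS : #|S| = 1 + b.
    rewrite cardsU1 card_imset; last exact: set1_inj.
    suff -> : set0 \notin [set [set x] | x in [set x in P | bad F d x]] by [].
    apply/imsetP => [[x _ e]]; have := cards1 x; by rewrite -e cards0.
  rewrite -tN -(cardsID [set N : {set 'I_n} | #|N| <= 1] (pileN F P)) -cS.
  apply: leq_add.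
    apply: leq_trans (subset_leq_card sS) _; apply: subset_leq_card; apply/subsetP => N.
    by rewrite !inE andbC.
  rewrite /L; apply: subset_leq_card; apply/subsetP => N; rewrite !inE -ltnNge.
  by case/andP => -> ->.
have k1 : k <= 1.
  rewrite leqNgt; apply/negP => k2.
  set p := trunc_log 2 d.
  have p1 : 2 ^ p <= d by apply: trunc_logP; lia.
  have p2 : d < 2 ^ p.+1 by apply: trunc_log_ltn.
  have p57 := p_bound h50 p1.
  set r := p.+1.
  have kr : k <= 2 ^ r.
    rewrite /r /k; move: (2 ^ p.+1) p2 => Q hQ; lia.
  have Nsz : forall N, N \in pileN F P -> #|N| <= p.+1.
    move=> N hN; have := pow_le hF hN; rewrite tN => h.
    rewrite leqNgt; apply/negP => big.
    have : 2 ^ p.+2 <= 2 ^ #|N| by rewrite leq_exp2l.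
    rewrite expnS; move: (2 ^ p.+1) p2 (2 ^ #|N|) h => Q hQ R hR; lia.
  have Ssum : \sum_(N in pileN F P) #|N| <= (t - 1) + p * L.
    apply: (@leq_trans (\sum_(N in pileN F P) ((N != set0 : nat) + p * (2 <= #|N| : nat)))).
      apply: leq_sum => N hN; have := Nsz N hN; rewrite -cards_eq0.
      move: #|N| => m; case: m => [|[|m]] //= h; lia.
    rewrite big_split /= -big_distrr /= !sum_card_dep.
    apply: leq_add => //.
    have -> : [set N in pileN F P | N != set0] = pileN F P :\ set0.
      by apply/setP => N; rewrite !inE andbC.
    have := cardsD1 set0 (pileN F P); rewrite N0 tN; move: #|_ :\ _| => u; lia.
  have Smin : \sum_(x in P) minn (eout F P x) (2 ^ r) < (r + 2) * k.
    rewrite -(ltr_nat rat) natr_sum natrM.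
    apply: (@le_lt_trans _ _ ((r + 2)%:R * W)%R).
      rewrite /W mulr_sumr; apply: ler_sum => x _; exact: Wx_min.
    by rewrite ltr_pM2l // ltr0n addn2.
  have Sk : \sum_(x in P) (k - degN F P x) <= \sum_(x in P) minn (eout F P x) (2 ^ r).
    apply: leq_sum => x xP; rewrite leq_min; apply/andP; split.
      have := key x xP; have := dn x; rewrite /k.
      move: (degN F P x) (nonN F P x) (eout F P x) => u v w; lia.
    exact: leq_trans (leq_subr _ _) kr.
  have dk : d * k <= \sum_(x in P) (k - degN F P x) + \sum_(x in P) degN F P x.
    rewrite -big_split /= -{1}cP -sum_nat_const; apply: leq_sum => x _.
    move: (degN F P x) => u; lia.
  rewrite sum_degN in dk.
  exact: (arith_final cd ct (erefl _) k2 gbd g2k hL p57 dk Sk Smin Ssum).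
have tc : t = c by move: k1 ct; rewrite /k; clearbody t; move=> *; lia.
have g1 : g < 2 by move: g2k; rewrite /k tc; clearbody g; move=> *; lia.
have L0 : L = 0 by move: hL gbd cd g1; rewrite tc; clearbody g b L; move=> *; lia.
split.
- by apply: leq_trans (ltnW g1) _.
- by rewrite tc; apply: leq_trans cd (leq_addr _ _).
- move=> N hN; rewrite leqNgt; apply/negP => big.
  move: L0; rewrite /L => /eqP; rewrite cards_eq0 => /eqP/setP/(_ N).
  rewrite !inE hN /= (ltn_trans _ big) //.
- exact: bad1.
Qed.
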